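(* For all partial Boolean functions $f:D\to\{0,1\}$ with $D\subseteq\{0,1\}^n$, we have $\mathrm{QS}(f)\le \mathrm{Q}(f)$.
   Context: Query model: for $x\in\{0,1\}^n$ the oracle $O_x$ acts by $O_x|i,b\rangle=|i,b\oplus x_i\rangle$. A $T$-query quantum algorithm applies input-independent unitaries $U_0,\dots,U_T$ interleaved with $O_x$ to $|0^m\rangle$, producing $|\psi_x\rangle=U_TO_x\cdots O_xU_0|0^m\rangle$. It then either measures the first qubit to produce an output bit, or outputs the mixed state obtained by tracing out a fixed subset of qubits. The trace distance is $\|\rho-\sigma\|_{tr}=\tfrac12\|\rho-\sigma\|_1$. $\mathrm{Q}(f)$ is the minimum $T$ such that some $T$-query algorithm outputs $f(x)$ with probability at least $2/3$ for every $x\in D$. $\mathrm{QS}(f)$ is the smallest $k$ such that some $k$-query algorithm outputs states $\rho_x$ ($x\in D$) with $\|\rho_x-\rho_y\|_{tr}\ge 1/6$ whenever $x,y\in D$ and $f(x)\ne f(y)$. *)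

(* Defs.v *)
From HB Require Import structures.
From mathcomp Require Import all_boot all_order all_algebra.
From mathcomp Require Import sesquilinear spectral algC.

Set Implicit Arguments.
Unset Strict Implicit.
Unset Printing Implicit Defensive.

Import Order.TTheory GRing.Theory Num.Theory Num.Def.
Local Open Scope ring_scope.

Definition adjmx (m p : nat) (A : 'M[algC]_(m, p)) : 'M[algC]_(p, m) :=
  map_mx conjC A^T.

(* ||A||_1 = tr sqrt(A^* A) = sum of singular values of A, i.e. sum of the
   square roots of the eigenvalues of A^* A (a normal matrix, diagonalized by
   the library's spectral decomposition). *)
Definition trnorm (d : nat) (A : 'M[algC]_d) : algC :=
  \sum_(i < d) sqrtC (spectral_diag (adjmx A *m A) 0 i).

Definition trdist (d : nat) (rho sigma : 'M[algC]_d) : algC :=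
  trnorm (rho - sigma) / 2%:R.

(* Computational basis of the state space of an algorithm with workspace of
   dimension w: (output qubit, (query index i, query bit b), workspace). *)
Definition basis (n w : nat) : finType := (bool * ('I_n * bool) * 'I_w)%type.

Definition dimS (n w : nat) : nat := #|basis n w|.

Definition ket (n w : nat) (s : basis n w) : 'cV[algC]_(dimS n w) :=
  delta_mx (enum_rank s) 0.

Definition oflip (n w : nat) (x : {ffun 'I_n -> bool}) (s : basis n w)
  : basis n w :=
  let: (o, (i, b), z) := s in (o, (i, b (+) x i), z).

Definition oracle (n w : nat) (x : {ffun 'I_n -> bool}) : 'M[algC]_(dimS n w) :=
  \matrix_(r, c) ((enum_val r == oflip x (enum_val c))%:R).

(* A T-query algorithm: workspace dimension, initial basis state |0^m>,
   and input-independent unitaries U_0, ..., U_T. *)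
Record qalg (n T : nat) := QAlg {
  qa_w : nat;
  qa_init : basis n qa_w;
  qa_U : nat -> 'M[algC]_(dimS n qa_w);
  qa_unitary : forall j, (j <= T)%N -> qa_U j \is unitarymx
}.

Fixpoint run_upto (n w : nat) (U : nat -> 'M[algC]_(dimS n w))
    (s0 : basis n w) (x : {ffun 'I_n -> bool}) (k : nat) : 'cV[algC]_(dimS n w) :=
  match k with
  | 0 => U 0%N *m ket s0
  | k'.+1 => U k *m (oracle w x *m run_upto U s0 x k')
  end.

Definition final_state (n T : nat) (A : qalg n T) (x : {ffun 'I_n -> bool}) :=
  run_upto (@qa_U n T A) (qa_init A) x T.

Definition out_prob (n T : nat) (A : qalg n T) (x : {ffun 'I_n -> bool})
    (v : bool) : algC :=
  \sum_(s : basis n (qa_w A) | s.1.1 == v)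
     `|final_state A x (enum_rank s) 0| ^+ 2.

Definition computes (n T : nat) (A : qalg n T)
    (D : {set {ffun 'I_n -> bool}}) (f : {ffun 'I_n -> bool} -> bool) : Prop :=
  forall x, x \in D -> 2%:R / 3%:R <= out_prob A x (f x).

(* Reduced state obtained from |psi><psi| by tracing out the E part of a
   decomposition of the basis as K x E (given by a bijection e with inverse g).
   Tracing out a fixed subset of qubits is such a decomposition. *)
Definition reduced_state (d : nat) (K E : finType) (g : K * E -> 'I_d)
    (psi : 'cV[algC]_d) : 'M[algC]_#|K| :=
  \matrix_(a, a') \sum_(eps : E)
     psi (g (enum_val a, eps)) 0 * (psi (g (enum_val a', eps)) 0)^*.

(* A k-query state-generating algorithm: an algorithm together with the
   subsystem decomposition that is traced out. *)
Record qsalg (n T : nat) := QSAlg {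
  qs_alg : qalg n T;
  qs_K : finType;
  qs_E : finType;
  qs_split : basis n (qa_w qs_alg) -> qs_K * qs_E;
  qs_join : qs_K * qs_E -> basis n (qa_w qs_alg);
  qs_splitK : cancel qs_split qs_join;
  qs_joinK : cancel qs_join qs_split
}.

Definition out_state (n T : nat) (B : qsalg n T) (x : {ffun 'I_n -> bool}) :
    'M[algC]_#|qs_K B| :=
  @reduced_state _ (qs_K B) (qs_E B) (fun p => enum_rank (@qs_join n T B p))
    (final_state (qs_alg B) x).

Definition separates (n T : nat) (B : qsalg n T)
    (D : {set {ffun 'I_n -> bool}}) (f : {ffun 'I_n -> bool} -> bool) : Prop :=
  forall x y, x \in D -> y \in D -> f x != f y ->
    1 / 6%:R <= trdist (out_state B x) (out_state B y).

(* Main.v *)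
Require Import Defs.
From HB Require Import structures.
From mathcomp Require Import all_boot all_order all_algebra.
From mathcomp Require Import sesquilinear spectral algC.
From mathcomp Require Import ring.
Set Implicit Arguments.
Unset Strict Implicit.
Unset Printing Implicit Defensive.
Import Order.TTheory GRing.Theory Num.Theory Num.Def.
Local Open Scope ring_scope.

Definition nrm d (v : 'cV[algC]_d) : algC := \sum_i `|v i 0| ^+ 2.

Lemma nrmE d (v : 'cV[algC]_d) : nrm v = (map_mx conjC v^T *m v) 0 0.
Proof. rewrite /nrm mxE; apply: eq_bigr => i _; by rewrite !mxE normCK mulrC. Qed.

Lemma nrm_unitary d (U : 'M[algC]_d) v : U \is unitarymx -> nrm (U *m v) = nrm v.
Proof.
move=> HU; have UU : map_mx conjC U^T *m U = 1%:M by apply: mulmx1C; apply/unitarymxP.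
by rewrite !nrmE trmx_mul map_mxM -mulmxA (mulmxA (map_mx _ U^T)) UU mul1mx.
Qed.

Lemma oflipK n w x : involutive (@oflip n w x).
Proof. by case=> [[o [i b]] z]; rewrite /= addbK. Qed.

Lemma oracle_mul n w x (v : 'cV[algC]_(dimS n w)) r :
  (oracle w x *m v) r 0 = v (enum_rank (oflip x (enum_val r))) 0.
Proof.
rewrite mxE (bigD1 (enum_rank (oflip x (enum_val r)))) //= big1 ?addr0.
  by rewrite mxE enum_rankK oflipK eqxx mul1r.
move=> c Hc; rewrite mxE; case: eqP => [E|]; last by rewrite mul0r.
by move: Hc; rewrite E oflipK enum_valK eqxx.
Qed.

Lemma nrm_oracle n w x (v : 'cV[algC]_(dimS n w)) : nrm (oracle w x *m v) = nrm v.
Proof.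
rewrite /nrm; under eq_bigr do rewrite oracle_mul.
have hi : injective (fun r : 'I_(dimS n w) => enum_rank (oflip x (enum_val r))).
  by move=> r1 r2 /enum_rank_inj /(can_inj (oflipK x)) /enum_val_inj.
by rewrite [RHS](reindex_inj hi).
Qed.

Lemma nrm_ket n w (s : basis n w) : nrm (ket s) = 1.
Proof.
rewrite /nrm (bigD1 (enum_rank s)) //= big1 ?addr0.
  by rewrite !mxE !eqxx normr1 expr1n.
by move=> i /negbTE Hi; rewrite !mxE Hi normr0 expr0n.
Qed.

Lemma nrm_final n T (A : qalg n T) x : nrm (final_state A x) = 1.
Proof.
rewrite /final_state.
suff: forall k, (k <= T)%N -> nrm (run_upto (@qa_U n T A) (qa_init A) x k) = 1 by apply.
elim=> [|k IH] Hk /=.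
  by rewrite nrm_unitary ?nrm_ket // qa_unitary.
by rewrite nrm_unitary ?qa_unitary // nrm_oracle IH // ltnW.
Qed.

Lemma sum_rank (T : finType) (F : 'I_#|T| -> algC) :
  \sum_i F i = \sum_(s : T) F (enum_rank s).
Proof.
rewrite (reindex enum_rank) //; exists enum_val => s _; [exact: enum_rankK | exact: enum_valK].
Qed.

Lemma out_prob_sum n T (A : qalg n T) x : out_prob A x true + out_prob A x false = 1.
Proof.
rewrite -(nrm_final A x) /nrm sum_rank (bigID (fun s : basis n (qa_w A) => s.1.1)) /=.
rewrite /out_prob; congr (_ + _); apply: eq_bigl => s; by case: (s.1.1).
Qed.
Lemma trnorm_scalar d (A : 'M[algC]_d) c :
  adjmx A *m A = c%:M -> trnorm A = d%:R * sqrtC c.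
Proof.
move=> H; rewrite /trnorm H.
have N : (c%:M : 'M[algC]_d) \is normalmx.
  by apply/normalmxP; rewrite scalar_mxC.
have /orthomx_spectralP E := N.
have Pu := spectral_unit (c%:M : 'M[algC]_d).
set P := spectralmx _ in E Pu. set sp := spectral_diag _ in E *.
have D : diag_mx sp = c%:M.
  have := congr1 (fun M => P *m M *m invmx P) E.
  rewrite !mulmxA (mulmxV Pu) mul1mx -(mulmxA _ P) (mulmxV Pu) mulmx1 => <-.
  by rewrite scalar_mxC -mulmxA (mulmxV Pu) mulmx1.
rewrite (eq_bigr (fun=> sqrtC c)); last first.
  move=> i _; move/matrixP: D => /(_ i i); rewrite !mxE eqxx /= mulr1n => ->.
  by [].
by rewrite sumr_const card_ord mulr_natl.
Qed.
Definition Eb n w := (('I_n * bool) * 'I_w)%type.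
Definition bsplit n w (s : basis n w) : bool * Eb n w := (s.1.1, (s.1.2, s.2)).
Definition bjoin n w (p : bool * Eb n w) : basis n w := ((p.1, p.2.1), p.2.2).
Lemma bsplitK n w : cancel (@bsplit n w) (@bjoin n w).
Proof. by case=> [[o ib] z]. Qed.
Lemma bjoinK n w : cancel (@bjoin n w) (@bsplit n w).
Proof. by case=> o [ib z]. Qed.

Definition mkB n T (A : qalg n T) : qsalg n T :=
  @QSAlg n T A bool (Eb n (qa_w A)) (@bsplit n (qa_w A)) (@bjoin n (qa_w A))
    (@bsplitK n (qa_w A)) (@bjoinK n (qa_w A)).

Definition Rst n T (A : qalg n T) x (b b' : bool) : algC :=
  \sum_(e : Eb n (qa_w A))
     final_state A x (enum_rank (bjoin (b, e))) 0 *
     (final_state A x (enum_rank (bjoin (b', e))) 0)^*.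

Lemma out_stateE n T (A : qalg n T) x b b' :
  out_state (mkB A) x (enum_rank b) (enum_rank b') = Rst A x b b'.
Proof. by rewrite /out_state /reduced_state mxE !enum_rankK. Qed.

Lemma Rst_herm n T (A : qalg n T) x b b' : Rst A x b b' = (Rst A x b' b)^*.
Proof.
rewrite /Rst rmorph_sum; apply: eq_bigr => e _.
by rewrite rmorphM /= conjCK mulrC.
Qed.

Lemma Rst_diag n T (A : qalg n T) x b : Rst A x b b = out_prob A x b.
Proof.
rewrite /Rst /out_prob; under eq_bigr do rewrite -normCK.
rewrite (reindex (@bjoin n (qa_w A))) /=; last first.
  by exists (@bsplit n (qa_w A)) => p _; [exact: bjoinK | exact: bsplitK].
pose G := fun p : bool * Eb n (qa_w A) => `|final_state A x (enum_rank (bjoin p)) 0| ^+ 2.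
have -> : \sum_(e : Eb n (qa_w A)) `|final_state A x (enum_rank (bjoin (b, e))) 0| ^+ 2
   = \sum_(o : bool | o == b) \sum_(e : Eb n (qa_w A)) G (o, e) by rewrite big_pred1_eq.
rewrite pair_big /=.
rewrite [RHS](eq_bigl (fun p : bool * Eb n (qa_w A) => (p.1 == b) && true)); last first.
  by move=> p; rewrite andbT.
by apply: eq_bigr => [[o e]].
Qed.

Lemma sum2 (F : 'I_#|(bool : finType)| -> algC) :
  \sum_i F i = F (enum_rank true) + F (enum_rank false).
Proof. by rewrite sum_rank big_bool. Qed.

Lemma adj2 (M : 'M[algC]_#|(bool : finType)|) :
  (forall b b', M (enum_rank b) (enum_rank b') = (M (enum_rank b') (enum_rank b))^*) ->
  M (enum_rank false) (enum_rank false) = - M (enum_rank true) (enum_rank true) ->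
  adjmx M *m M = (`|M (enum_rank true) (enum_rank true)| ^+ 2
                  + `|M (enum_rank true) (enum_rank false)| ^+ 2)%:M.
Proof.
move=> H Hff.
have Ha := H true true. have Hft := H false true.
apply/matrixP => i j; rewrite -(enum_valK i) -(enum_valK j).
rewrite !mxE sum2 /adjmx !mxE -!H (inj_eq enum_rank_inj) !normCK.
case: (enum_val i); case: (enum_val j) => /=; rewrite ?Hff ?Hft -?Ha. all: by rewrite ?mulr1n ?mulr0n; ring.
Qed.


Lemma ge0_inv (k : nat) : (0 : algC) <= 1 / k%:R.
Proof. by rewrite divr_ge0 ?ler01 ?ler0n. Qed.

Lemma sixth_third : (1 / 6%:R : algC) <= 1 / 3%:R.
Proof.
rewrite -subr_ge0 (_ : 1 / 3%:R - 1 / 6%:R = 1 / 6%:R :> algC) ?ge0_inv //.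
by field.
Qed.

Lemma final_ineq (a b : algC) : 1 / 3%:R <= `|a| ->
  1 / 6%:R <= sqrtC (`|a| ^+ 2 + `|b| ^+ 2).
Proof.
move=> Ha.
rewrite -(sqrCK (ge0_inv 6)) ler_sqrtC ?nnegrE ?exprn_ge0 ?ge0_inv ?addr_ge0 ?normr_ge0 //.
apply: ler_wpDr; first by rewrite exprn_ge0 ?normr_ge0.
rewrite ler_pXn2r ?nnegrE ?normr_ge0 ?ge0_inv //.
  exact: le_trans sixth_third Ha.
all: by rewrite exprn_ge0 ?normr_ge0.

Qed.

Lemma third_bound (p q : algC) : 2%:R / 3%:R <= p -> 2%:R / 3%:R <= q ->
  1 / 3%:R <= `|p - (1 - q)|.
Proof.
move=> Hp Hq.
have H : 1 / 3%:R <= p - (1 - q).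
  rewrite -subr_ge0 (_ : p - (1 - q) - 1 / 3%:R = (p - 2%:R / 3%:R) + (q - 2%:R / 3%:R)).
    by rewrite addr_ge0 ?subr_ge0.
  by field.
by rewrite ger0_norm // (le_trans (ge0_inv 3) H).
Qed.

Theorem proposition6 (n : nat) (D : {set {ffun 'I_n -> bool}})
    (f : {ffun 'I_n -> bool} -> bool) (T : nat) :
  (exists A : qalg n T, computes A D f) ->
  exists (k : nat) (B : qsalg n k), (k <= T)%N /\ separates B D f.
Proof.
move=> [A HA]; exists T, (mkB A); split => // x y Hx Hy Hf.
set M := out_state (mkB A) x - out_state (mkB A) y.
have HM : forall b b', M (enum_rank b) (enum_rank b') = Rst A x b b' - Rst A y b b'.
  by move=> b b'; rewrite -!out_stateE /M !mxE.
have Hh : forall b b', M (enum_rank b) (enum_rank b') = (M (enum_rank b') (enum_rank b))^*.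
  by move=> b b'; rewrite !HM rmorphB /= -!Rst_herm.
have ex : out_prob A x false = 1 - out_prob A x true.
  by rewrite -(out_prob_sum A x); ring.
have ey : out_prob A y false = 1 - out_prob A y true.
  by rewrite -(out_prob_sum A y); ring.
have Hff : M (enum_rank false) (enum_rank false) = - M (enum_rank true) (enum_rank true).
  by rewrite !HM !Rst_diag ex ey; ring.
have Hadj := adj2 Hh Hff.
rewrite /trdist (trnorm_scalar Hadj).
have -> : (#|qs_K (mkB A)|%:R : algC) = 2%:R by rewrite /= card_bool.
rewrite mulrAC divff ?pnatr_eq0 // [X in _ <= X]mul1r.
apply: final_ineq; rewrite HM !Rst_diag.
have E1 : forall p : algC, 1 - (1 - p) = p by move=> p; ring.
have Hpx := HA x Hx; have Hpy := HA y Hy.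
case Efx : (f x) in Hf Hpx; case Efy : (f y) in Hf Hpy => //.
  rewrite ey in Hpy; have := third_bound Hpx Hpy; by rewrite E1.
rewrite ex in Hpx; have := third_bound Hpy Hpx; by rewrite E1 distrC.
Qed.
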